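(* Let $G$ be a finite simple graph with vertices $v_1,\dots,v_n$ ($n\ge 1$) in which no vertex is adjacent to all other vertices, let $d\ge 1$ be an integer, let $G'$ be the graph constructed from $(G,d)$ as described in the context, and let $h=n(n+1)+d$. Suppose $S_1,\dots,S_h$ are pairwise disjoint vertex sets of $G'$, each inducing a connected subgraph, such that for all $i\ne j$ some edge of $G'$ joins a vertex of $S_i$ to a vertex of $S_j$. Then for each $p\in\{1,\dots,n\}$ there exists $q\in\{1,\dots,n+1\}$ such that the single-vertex set $\{b_{p,q}\}$ is one of the sets $S_1,\dots,S_h$.
   Context: Construction of $G'$ from a graph $G$ with vertices $v_1,\dots,v_n$ and an integer $d$: say $v_i$ dominates $v_j$ if $v_i=v_j$ or $v_iv_j$ is an edge of $G$. The vertex set of $G'$ consists of top vertices $t_1,\dots,t_d$, middle vertices $m_1,\dots,m_n$, and bottom vertices $b_{j,k}$ for $1\le j\le n$, $1\le k\le n+1$. Edges: the top vertices form a clique; the middle vertices form an independent set; the bottom vertices form a clique (of size $n(n+1)$); every top vertex is adjacent to every middle vertex; there are no top–bottom edges; middle vertex $m_i$ is adjacent to bottom vertex $b_{j,k}$ if and only if $v_i$ dominates $v_j$ in $G$. *)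

(* Defs.v *)
From HB Require Import structures.
From mathcomp Require Import all_boot.
Set Implicit Arguments. Unset Strict Implicit. Unset Printing Implicit Defensive.

(* Vertex type of G': top t_1..t_d, middle m_1..m_n, bottom b_{j,k} (j<n, k<n+1).
   Indices are 0-based ordinals. *)
Inductive gvert (n d : nat) :=
  | Top of 'I_d
  | Mid of 'I_n
  | Bot of 'I_n & 'I_n.+1.

Definition gvert_enc n d (v : gvert n d) : ('I_d + 'I_n) + ('I_n * 'I_n.+1) :=
  match v with Top t => inl (inl t) | Mid m => inl (inr m) | Bot j k => inr (j, k) end.
Definition gvert_dec n d (x : ('I_d + 'I_n) + ('I_n * 'I_n.+1)) : gvert n d :=
  match x with inl (inl t) => @Top n d t | inl (inr m) => @Mid n d m
             | inr (j, k) => @Bot n d j k end.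
Lemma gvert_encK n d : cancel (@gvert_enc n d) (@gvert_dec n d).
Proof. by case. Qed.
HB.instance Definition _ n d := Finite.copy (gvert n d) (can_type (@gvert_encK n d)).

Definition dominates n (e : rel 'I_n) (i j : 'I_n) : bool := (i == j) || e i j.

Definition Gprime_adj n d (e : rel 'I_n) (x y : gvert n d) : bool :=
  match x, y with
  | Top t, Top t' => t != t'
  | Top _, Mid _ | Mid _, Top _ => true
  | Mid _, Mid _ => false
  | Bot j k, Bot j' k' => (j, k) != (j', k')
  | Top _, Bot _ _ | Bot _ _, Top _ => false
  | Mid i, Bot j _ | Bot j _, Mid i => dominates e i j
  end.

Definition induces_connected (T : finType) (r : rel T) (S : {set T}) : Prop :=
  S != set0 /\
  forall x y, x \in S -> y \in S ->
    connect [rel u v | [&& r u v, u \in S & v \in S]] x y.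

Definition simple_graph (T : finType) (r : rel T) : Prop :=
  symmetric r /\ irreflexive r.

(* Main.v *)
Require Import Defs.
From mathcomp Require Import all_boot zify.
Set Implicit Arguments. Unset Strict Implicit. Unset Printing Implicit Defensive.

Lemma disj_sum (T I : finType) (S : I -> {set T}) (A : {set T}) :
  (forall i j, i != j -> [disjoint S i & S j]) -> \sum_i #|S i :&: A| <= #|A|.
Proof.
move=> dS.
have dF : forall i j, i != j -> [disjoint S i :&: A & S j :&: A].
  move=> i j /dS; rewrite -!setI_eq0 => /eqP H; apply/eqP.
  by rewrite setIACA setIid H set0I.
have := @partition_disjoint_bigcup _ _ _ _ addn _ (fun _ => 1) dF.
rewrite sum1_card => E.
have -> : \sum_i #|S i :&: A| = \sum_i \sum_(x in S i :&: A) 1.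
  by apply: eq_bigr => i _; rewrite sum1_card.
rewrite -E; apply: subset_leq_card; apply/bigcupsP => i _; exact: subsetIr.
Qed.

Lemma connect_inv (T:finType) (r : rel T) (Q : pred T) x y :
  (forall u v, r u v -> Q u -> Q v) -> connect r x y -> Q x -> Q y.
Proof.
move=> H /connectP [pth Hp ->]; elim: pth x Hp => //= z pth IH x /andP [rxz Hp] Qx.
exact: IH Hp (H _ _ rxz Qx).
Qed.

Definition isTop n d (x : gvert n d) := if x is Top _ then true else false.
Definition isMid n d (x : gvert n d) := if x is Mid _ then true else false.
Definition isRow n d p (x : gvert n d) := if x is Bot j _ then j == p else false.
Definition isOth n d p (x : gvert n d) := if x is Bot j _ then j != p else false.

Lemma card_TS n d : #|[set x : gvert n d | isTop x]| <= d.
Proof.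
apply: (@leq_trans #|(@Top n d) @: [set: 'I_d]|).
  apply/subset_leq_card/subsetP => x; rewrite inE; case: x => // t _.
  by apply: imset_f; rewrite in_setT.
by apply: (leq_trans (leq_imset_card _ _)); rewrite cardsT card_ord.
Qed.

Lemma card_MS n d : #|[set x : gvert n d | isMid x]| <= n.
Proof.
apply: (@leq_trans #|(@Mid n d) @: [set: 'I_n]|).
  apply/subset_leq_card/subsetP => x; rewrite inE; case: x => // t _.
  by apply: imset_f; rewrite in_setT.
by apply: (leq_trans (leq_imset_card _ _)); rewrite cardsT card_ord.
Qed.

Lemma card_RS_OS n d p :
  #|[set x : gvert n d | isRow p x]| <= n.+1 /\
  #|[set x : gvert n d | isOth p x]| <= n * n.+1 - n.+1.
Proof.
pose F := (fun jk : 'I_n * 'I_n.+1 => @Bot n d jk.1 jk.2) @: [set: 'I_n * 'I_n.+1].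
pose Rs := (@Bot n d p) @: [set: 'I_n.+1].
have cR : #|Rs| = n.+1.
  by rewrite card_imset ?cardsT ?card_ord // => a b [].
have cF : #|F| <= n * n.+1.
  by apply: (leq_trans (leq_imset_card _ _)); rewrite cardsT card_prod !card_ord.
have RF : Rs \subset F.
  apply/subsetP => x /imsetP [q _ ->].
  by apply/imsetP; exists (p, q); rewrite ?in_setT.
split.
  rewrite -cR; apply/subset_leq_card/subsetP => x; rewrite inE; case: x => // j k /eqP ->.
  by apply: imset_f; rewrite in_setT.
apply: (@leq_trans #|F :\: Rs|).
  apply/subset_leq_card/subsetP => x; rewrite inE; case: x => // j k jp.
  rewrite !inE; apply/andP; split.
    apply/negP => /imsetP [q _ [E _]]; by move: jp; rewrite /= E eqxx.
  by apply/imsetP; exists (j, k); rewrite ?in_setT.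
by rewrite cardsD (setIidPr RF) cR; lia.
Qed.

Theorem lemma4 (n d : nat) (e : rel 'I_n) :
  0 < n -> simple_graph e ->
  (forall v : 'I_n, exists u : 'I_n, u != v /\ ~~ e v u) ->
  0 < d ->
  forall S : 'I_(n * n.+1 + d) -> {set gvert n d},
  (forall i j, i != j -> [disjoint S i & S j]) ->
  (forall i, induces_connected (@Gprime_adj n d e) (S i)) ->
  (forall i j, i != j ->
     exists x, exists y, [/\ x \in S i, y \in S j & @Gprime_adj n d e x y]) ->
  forall p : 'I_n, exists q : 'I_n.+1, exists i, S i = [set @Bot n d p q].
Proof.
move=> n0 _ _ d0 S dS cS adj p.
case: (boolP [exists q, exists i, S i == [set @Bot n d p q]]) =>
  [/existsP [q /existsP [i /eqP E]]|Hno]; first by exists q, i.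
exfalso.
pose TS := [set x : gvert n d | isTop x].
pose MS := [set x : gvert n d | isMid x].
pose RS := [set x : gvert n d | isRow p x].
pose OS := [set x : gvert n d | isOth p x].
have cls : forall x : gvert n d, [|| isTop x, isMid x, isRow p x | isOth p x].
  by case=> [t|m|j k] //=; case: (j == p).
pose t i := #|S i :&: TS|.
pose m i := #|S i :&: MS|.
pose r i := #|S i :&: RS|.
pose o i := #|S i :&: OS|.
have cardS : forall i, #|S i| <= t i + m i + r i + o i.
  move=> i.
  have h1 := (leq_card_setU (S i :&: TS :|: S i :&: MS :|: S i :&: RS) (S i :&: OS)).1.
  have h2 := (leq_card_setU (S i :&: TS :|: S i :&: MS) (S i :&: RS)).1.
  have h3 := (leq_card_setU (S i :&: TS) (S i :&: MS)).1.
  have h0 : #|S i| <= #|S i :&: TS :|: S i :&: MS :|: S i :&: RS :|: S i :&: OS|.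
    apply/subset_leq_card/subsetP => x xS.
    by move: (cls x); rewrite !inE xS /= -!orbA.
  rewrite /t /m /r /o; lia.
have ne : forall i, 0 < #|S i| by move=> i; rewrite card_gt0; case: (cS i).
have inS : forall i (x : gvert n d) (A : {set gvert n d}), x \in S i -> x \in A -> 0 < #|S i :&: A|.
  by move=> i x A xS xA; apply/card_gt0P; exists x; rewrite inE xS.
have Nn : n.+1 <= n * n.+1 by rewrite -{1}[n.+1]mul1n leq_mul2r n0 orbT.
have L2 : forall i, 0 < t i -> 0 < m i.
  move=> i ti; rewrite lt0n; apply/negP => /eqP mi0.
  have MS0 : forall y, y \in S i -> ~~ isMid y.
    move=> y yS; apply/negP => my.
    have := inS i y MS yS; rewrite inE my => /(_ isT); rewrite -/(m i) mi0.
    by [].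
  have [x /setIP [xS xT]] := card_gt0P ti.
  have allT : forall y, y \in S i -> isTop y.
    move=> y yS; case: (cS i) => _ /(_ x y xS yS) C.
    apply: (connect_inv _ C); last by rewrite inE in xT.
    move=> u v /and3P [uv uS vS]; case: u uv uS => // tu; case: v vS => //= mv vS _ _.
    by move: (MS0 _ vS).
  have key : forall j, 0 < t j + m j.
    move=> j; case: (eqVneq i j) => [<-|ij]; first by lia.
    have [x' [y [x'S yS A]]] := adj i j ij.
    move: (allT _ x'S) A; case: x' x'S => // tx _ _.
    case: y yS => [ty|my|] // yS _.
      by have := inS j _ TS yS; rewrite inE /= => /(_ isT); rewrite -/(t j); lia.
    by have := inS j _ MS yS; rewrite inE /= => /(_ isT); rewrite -/(m j); lia.
  have H1 : \sum_(j < n * n.+1 + d) 1 <= \sum_j (t j + m j) by apply: leq_sum => j _; exact: key.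
  rewrite sum1_card card_ord big_split /= in H1.
  have h3 : \sum_(j < n * n.+1 + d) #|S j :&: TS| <= d :=
    leq_trans (disj_sum TS dS) (card_TS n d).
  have h4 : \sum_(j < n * n.+1 + d) #|S j :&: MS| <= n :=
    leq_trans (disj_sum MS dS) (card_MS n d).
  have := leq_trans H1 (leq_add h3 h4); lia.
pose isP i := (t i == 0) && (m i == 0).
pose Qb i := ~~ isP i && (0 < r i + o i).
pose Q0 i := ~~ isP i && (r i + o i == 0).
pose Z i := Q0 i && (t i == 0).
have L1 : forall i, r i + (isP i + isP i) + Qb i <= (r i + o i) + (r i + o i).
  move=> i; rewrite /Qb; case: (boolP (isP i)) => HP /=.
    move/andP: HP => [/eqP t0 /eqP m0]; have c := cardS i; have nei := ne i.
    have : ~~ ((r i == 1) && (o i == 0)).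
      apply/negP => /andP [/eqP r1 /eqP o0].
      have S1 : #|S i| == 1 by apply/eqP; lia.
      case/cards1P: S1 => x Ex.
      have : 0 < r i by lia.
      move/card_gt0P => [y /setIP [yS yR]].
      move: yS yR; rewrite Ex inE => /eqP ->; rewrite inE.
      case: x Ex => // j q Ex /= /eqP jp.
      apply: (negP Hno); apply/existsP; exists q; apply/existsP; exists i.
      by rewrite Ex jp.
    by rewrite negb_and => /orP [/eqP ?|/eqP ?]; lia.
  by case: (ltnP 0 (r i + o i)) => H /=; lia.
have L2' : forall i, ~~ isP i -> 0 < m i.
  move=> i; rewrite negb_and -!lt0n => /orP [ti|mi] //; exact: L2.
have allMid : forall i z, z \in S i -> t i = 0 -> r i + o i = 0 -> isMid z.
  move=> i z zS t0 ro0; case: z zS => [tt|mm|j k] zS //.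
    exfalso; have := inS i _ TS zS; rewrite inE => /(_ isT); rewrite -/(t i); lia.
  exfalso; case: (eqVneq j p) => jp.
    have := inS i _ RS zS; rewrite inE /= jp eqxx => /(_ isT); rewrite -/(r i); lia.
  have := inS i _ OS zS; rewrite inE /= jp => /(_ isT); rewrite -/(o i); lia.
have Zuniq : forall i j, Z i -> Z j -> i = j.
  move=> i j /andP [/andP [_ /eqP roi] /eqP ti] /andP [/andP [_ /eqP roj] /eqP tj].
  case: (eqVneq i j) => // ij; exfalso.
  have [x [y [xS yS A]]] := adj i j ij.
  have := allMid i x xS ti roi; have := allMid j y yS tj roj.
  case: x A {xS} => [?|mx|? ?] A //; case: y A {yS} => [?|my|? ?] //.
have SZ : \sum_(j < n * n.+1 + d) (Z j : nat) <= 1.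
  rewrite (_ : \sum_(j < n * n.+1 + d) (Z j : nat) = \sum_(j < n * n.+1 + d | Z j) 1);
    last by rewrite [RHS]big_mkcond; apply: eq_bigr => j _; case: (Z j).
  rewrite sum1dep_card; apply/card_le1_eqP => a b; rewrite !inE => Za Zb.
  by rewrite (Zuniq _ _ Za Zb).
have E1 : \sum_(j < n * n.+1 + d) 1 =
          \sum_(j < n * n.+1 + d) (isP j + Qb j + Q0 j).
  apply: eq_bigr => j _; rewrite /Qb /Q0; case: (isP j) => //=.
  by case: (ltnP 0 (r j + o j)) => H /=; lia.
have E2 : \sum_(j < n * n.+1 + d) (Qb j + Q0 j) <= \sum_(j < n * n.+1 + d) m j.
  apply: leq_sum => j _; rewrite /Qb /Q0; case: (boolP (isP j)) => //= HP.
  by have := L2' j HP; case: (ltnP 0 (r j + o j)) => H /=; lia.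
have E3 : \sum_(j < n * n.+1 + d) (Q0 j : nat) <= \sum_(j < n * n.+1 + d) (Z j + t j).
  apply: leq_sum => j _; rewrite /Z; case: (Q0 j) => //=; case: eqP => //= ?; lia.
have E4 : \sum_(j < n * n.+1 + d) (r j + (isP j + isP j) + Qb j) <=
          \sum_(j < n * n.+1 + d) ((r j + o j) + (r j + o j)).
  by apply: leq_sum => j _; exact: L1.
have [cR cO] := @card_RS_OS n d p.
have BT : \sum_(j < n * n.+1 + d) t j <= d := leq_trans (disj_sum TS dS) (card_TS n d).
have BM : \sum_(j < n * n.+1 + d) m j <= n := leq_trans (disj_sum MS dS) (card_MS n d).
have BR : \sum_(j < n * n.+1 + d) r j <= n.+1 := leq_trans (disj_sum RS dS) cR.
have BO : \sum_(j < n * n.+1 + d) o j <= n * n.+1 - n.+1 := leq_trans (disj_sum OS dS) cO.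
rewrite sum1_card card_ord !big_split /= in E1.
rewrite !big_split /= in E2 E3 E4.
set sP := \sum_(j < _) (isP j : nat) in E1 E4.
set sB := \sum_(j < _) (Qb j : nat) in E1 E2 E4.
set s0 := \sum_(j < _) (Q0 j : nat) in E1 E2 E3.
set sZ := \sum_(j < _) (Z j : nat) in E3 SZ.
set sT := \sum_(j < _) t j in E3 BT.
set sM := \sum_(j < _) m j in E2 BM.
set sR := \sum_(j < _) r j in E4 BR.
set sO := \sum_(j < _) o j in E4 BO.
lia.
Qed.
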